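(* Let $(\Xi,\mathcal G,\mathbb Q)$ be a probability space, $W^1=(W^1_t)_{0\le t\le T}$ and $W^2=(W^2_t)_{0\le t\le T}$ two independent identically distributed $\mathbb R^m$-valued processes with continuous trajectories and $\mathbb E_{\mathbb Q}[\sup_{t\le T}|W^1_t|^q]<\infty$, and let $(W^{i,j}_{s,t})_{0\le s\le t\le T}$, $i,j=1,2$, be four $\mathbb R^{m\times m}$-valued continuous two-parameter processes with $\mathbb E_{\mathbb Q}[\sup_{s\le t}|W^{i,j}_{s,t}|^q]<\infty$, such that $(W^1,W^{1,1})$ is independent of $W^2$ and, for $\mathbb Q$-a.e. $\xi$, $W^{i,j}_{r,t}(\xi)=W^{i,j}_{r,s}(\xi)+W^{i,j}_{s,t}(\xi)+W^i_{r,s}(\xi)\otimes W^j_{s,t}(\xi)$ for all $i,j\in\{1,2\}$ and $0\le r\le s\le t\le T$. For $i=1,2$ and $n\ge0$ let $W^{i,n}$ be the linear interpolation of $W^i$ at the dyadic points $t^k_n=kT/2^n$: $$W^{i,n}_t(\xi)=\sum_{k=0}^{2^n-1}\Big(W^i_{t^k_n}(\xi)+W^i_{t^k_n,t^{k+1}_n}(\xi)\frac{2^n(t-t^k_n)}{T}\Big)\mathbf 1_{[t^k_n,t^{k+1}_n)}(t).$$ If for $\mathbb Q$-a.e. $\xi\in\Xi$, for all $(s,t)\in\mathcal S_2^T$, $$W^{2,1}_{s,t}(\xi)=\lim_{n\to\infty}\int_s^t\big(W^{2,n}_r(\xi)-W^{2,n}_s(\xi)\big)\otimes dW^{1,n}_r(\xi),$$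 then there exists a measurable function $\mathcal I:C([0,T];\mathbb R^m)^2\to C(\mathcal S_2^T;\mathbb R^m\otimes\mathbb R^m)$ such that $\mathbb Q\big(\{\xi\in\Xi:W^{2,1}(\xi)=\mathcal I(W^2(\xi),W^1(\xi))\}\big)=1$.
   Context: $T>0$, $m\ge1$, $q\ge 1$ fixed; $\mathcal S_2^T=\{(s,t)\in[0,T]^2:s\le t\}$; for a path $f$, $f_{s,t}=f_t-f_s$. The integral in the hypothesis is a Riemann–Stieltjes integral against the piecewise linear path $W^{1,n}$. *)

(* Defs.v *)
From HB Require Import structures.
From mathcomp Require Import all_boot all_order all_algebra.
From mathcomp Require Import all_classical all_reals all_analysis.
Set Implicit Arguments. Unset Strict Implicit. Unset Printing Implicit Defensive.
Import Order.TTheory GRing.Theory Num.Theory.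
Import numFieldNormedType.Exports.
Local Open Scope classical_set_scope.
Local Open Scope ring_scope.

(* Conventions: R^m is represented by row vectors 'rV[R]_m, R^m (x) R^m by
   'M[R]_m, and a (x) b := a^T *m b, so that (a (x) b) i j = a_i b_j. *)

Section Paths.
Variables (R : realType) (T : R) (m : nat).

Definition S2 : set (R * R) := [set p | 0 <= p.1 /\ p.1 <= p.2 /\ p.2 <= T].

Definition cpath := {f : R -> 'rV[R]_m | {within `[0, T], continuous f}}.

Lemma cst_cpath : {within `[0, T], continuous (fun _ : R => (0 : 'rV[R]_m))}.
Proof. apply: continuous_subspaceT => x; exact: cvg_cst. Qed.

HB.instance Definition _ := gen_eqMixin cpath.
HB.instance Definition _ := gen_choiceMixin cpath.
HB.instance Definition _ := isPointed.Build cpath (exist _ _ cst_cpath).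

Definition c2path := {g : R * R -> 'M[R]_m | {within S2, continuous g}}.

Lemma cst_c2path : {within S2, continuous (fun _ : R * R => (0 : 'M[R]_m))}.
Proof. apply: continuous_subspaceT => x; exact: cvg_cst. Qed.

HB.instance Definition _ := gen_eqMixin c2path.
HB.instance Definition _ := gen_choiceMixin c2path.
HB.instance Definition _ := isPointed.Build c2path (exist _ _ cst_c2path).

(** Borel sigma-algebras of these (separable Banach, sup-norm) spaces, i.e.
    the sigma-algebras generated by the coordinate evaluations. *)
Definition cpath_gens : set (set cpath) :=
  [set A | exists (t : R) (i : 'I_m) (B : set R),
     [/\ 0 <= t <= T, measurable B & A = (fun f : cpath => sval f t ord0 i) @^-1` B]].

Definition c2path_gens : set (set c2path) :=
  [set A | exists (p : R * R) (i j : 'I_m) (B : set R),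
     [/\ S2 p, measurable B & A = (fun g : c2path => sval g p i j) @^-1` B]].


Definition path_sigma : set (set (R -> 'rV[R]_m)) :=
  <<s [set A | exists (t : R) (i : 'I_m) (B : set R),
     [/\ 0 <= t <= T, measurable B & A = (fun f : R -> 'rV[R]_m => f t ord0 i) @^-1` B]] >>.

Definition dyad (n k : nat) : R := k%:R * T / (2 ^ n)%:R.

(** linear interpolation of f at the dyadic points of level n
    (with the convention that the interpolation at t = T equals f T,
    making it a continuous piecewise linear path on [0,T]) *)
Definition interp (n : nat) (f : R -> 'rV[R]_m) (t : R) : 'rV[R]_m :=
  if t == T then f T else
  \sum_(k < 2 ^ n)
    (if (dyad n k <= t) && (t < dyad n k.+1) then
       f (dyad n k) + ((2 ^ n)%:R * (t - dyad n k) / T) *: (f (dyad n k.+1) - f (dyad n k))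
     else 0).

End Paths.

Notation cpathM T m := (g_sigma_algebraType (@cpath_gens _ T m)).
Notation c2pathM T m := (g_sigma_algebraType (@c2path_gens _ T m)).

Section RS.
Variable R : realType.

Definition is_RS_integral (f g : R -> R) (a b I : R) : Prop :=
  forall e : R, 0 < e -> exists2 d : R, 0 < d &
    forall (N : nat) (x tau : nat -> R),
      x 0%N = a -> x N = b ->
      (forall k, (k < N)%N -> x k <= tau k <= x k.+1 /\ x k.+1 - x k < d) ->
      `| \sum_(k < N) f (tau k) * (g (x k.+1) - g (x k)) - I | < e.

End RS.

Section Proba.
Variables (d : measure_display) (Xi : measurableType d) (R : realType).

Definition rv_gens (I : Type) (D : set I) (X : I -> Xi -> R) : set (set Xi) :=
  [set A | exists i (B : set R), [/\ D i, measurable B & A = X i @^-1` B]].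

Definition indep_sigma (Q : probability Xi R) (G1 G2 : set (set Xi)) : Prop :=
  forall A B, <<s G1 >> A -> <<s G2 >> B ->
    (Q (A `&` B) = Q A * Q B)%E.

End Proba.

Section Processes.
Variables (d : measure_display) (Xi : measurableType d) (R : realType)
  (T : R) (m : nat).

Definition gens_path (W : Xi -> R -> 'rV[R]_m) : set (set Xi) :=
  rv_gens [set p : R * 'I_m | 0 <= p.1 <= T] (fun p xi => W xi p.1 ord0 p.2).

Definition gens_2path (W : Xi -> R -> R -> 'M[R]_m) : set (set Xi) :=
  rv_gens [set p : (R * R) * ('I_m * 'I_m) | S2 T p.1]
    (fun p xi => W xi p.1.1 p.1.2 p.2.1 p.2.2).

End Processes.

Definition chen (R : realType) (T : R) (m : nat)
    (Wi Wj : R -> 'rV[R]_m) (Wij : R -> R -> 'M[R]_m) : Prop :=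
  forall r s t, 0 <= r -> r <= s -> s <= t -> t <= T ->
    Wij r t = Wij r s + Wij s t + (Wi s - Wi r)^T *m (Wj t - Wj s).

(* Main.v *)
Require Import Defs.
From HB Require Import structures.
From mathcomp Require Import all_boot all_order all_algebra.
From mathcomp Require Import all_classical all_reals all_analysis.
Import Order.TTheory GRing.Theory Num.Theory.
Import numFieldNormedType.Exports.
Local Open Scope classical_set_scope.
Local Open Scope ring_scope.
From mathcomp Require Import lra ring.
Set Implicit Arguments. Unset Strict Implicit. Unset Printing Implicit Defensive.

Definition Lim (R : realType) (u : nat -> R) : R :=
  fine (limn_esup (fun n => (u n)%:E)).

Lemma LimE (R : realType) (u : nat -> R) (l : R) : u n @[n --> \oo] --> l -> Lim u = l.
Proof.
move=> ul; rewrite /Lim (cvg_limn_einf_sup (l := l%:E) _).2 //.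
by apply: cvg_EFin => //; near=> n.
Unshelve. all: by end_near. Qed.

Lemma contw_ed {R : realType} {U V : pseudoMetricType R} (A : set U) (f : U -> V) :
  {within A, continuous f} -> forall x, A x -> forall e, 0 < e ->
  exists2 d, 0 < d & forall y, A y -> ball x d y -> ball (f x) e (f y).
Proof.
move=> /subspace_continuousP cf x Ax e e0.
have := cf x Ax (ball (f x) e) (nbhsx_ballx _ _ e0).
move=> /nbhs_ballP[d d0 H]; exists d => // y Ay xy.
exact: H.
Qed.

Lemma ed_contw {R : realType} {U V : pseudoMetricType R} (A : set U) (f : U -> V) :
  (forall x, A x -> forall e, 0 < e ->
  exists2 d, 0 < d & forall y, A y -> ball x d y -> ball (f x) e (f y)) ->
  {within A, continuous f}.
Proof.
move=> H; apply/subspace_continuousP => x Ax P /nbhs_ballP[e e0 eP].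
have [d d0 Hd] := H x Ax e e0.
apply/nbhs_ballP; exists d => // y xy Ay; exact/eP/Hd.
Qed.

Section Grid.
Variables (R : realType) (T : R).
Hypothesis hT : 0 < T.

Lemma pow2_gt0 n : 0 < (2 ^ n)%:R :> R.
Proof. by rewrite ltr0n expn_gt0. Qed.

Lemma dyad_ge0 n k : 0 <= dyad T n k.
Proof. by rewrite /dyad divr_ge0 ?mulr_ge0 ?ler0n ?(ltW hT) ?(ltW (pow2_gt0 _)). Qed.

Lemma dyad_le n a b : (a <= b)%N -> dyad T n a <= dyad T n b.
Proof.
move=> ab; rewrite /dyad ler_pM2r ?invr_gt0 ?pow2_gt0 // ler_pM2r //.
by rewrite ler_nat.
Qed.

Lemma dyad_leT n k : (k <= 2 ^ n)%N -> dyad T n k <= T.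
Proof.
move=> kn; rewrite /dyad ler_pdivrMr ?pow2_gt0 // mulrC ler_pM2l //.
by rewrite ler_nat.
Qed.

Lemma dyadS n k : dyad T n k.+1 = dyad T n k + T / (2 ^ n)%:R.
Proof. by rewrite /dyad -natr1 !mulrDl mul1r. Qed.

Definition fl (k : nat) (s : R) : nat := Num.truncn (s * (2 ^ k)%:R / T).

Lemma fl_le k s : 0 <= s -> dyad T k (fl k s) <= s.
Proof.
move=> s0; rewrite /dyad /fl ler_pdivrMr ?pow2_gt0 // -ler_pdivlMr //.
by rewrite truncn_le divr_ge0 ?mulr_ge0 ?ler0n ?(ltW hT).
Qed.

Lemma fl_gt k s : 0 <= s -> s < dyad T k (fl k s) + T / (2 ^ k)%:R.
Proof.
move=> s0; rewrite -dyadS /dyad /fl ltr_pdivlMr ?pow2_gt0 // -ltr_pdivrMr //.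
exact: truncnS_gt.
Qed.

Lemma fl_mono k s t : s <= t -> (fl k s <= fl k t)%N.
Proof.
move=> st; apply: le_truncn; rewrite ler_pM2r ?invr_gt0 // ler_pM2r //.
Qed.

Lemma fl_leT k t : t <= T -> (fl k t <= 2 ^ k)%N.
Proof.
move=> tT; rewrite /fl truncn_le_nat; apply: (@le_lt_trans _ _ (2 ^ k)%:R); last by rewrite ltr_nat.
rewrite ler_pdivrMr // mulrC; apply: ler_wpM2l => //; exact: ltW (pow2_gt0 _).
Qed.

Definition gk (k : nat) (p : R * R) : R * R :=
  (dyad T k (fl k p.1), dyad T k (fl k p.2)).

Definition Dg : set (R * R) := [set p | exists n a b,
  (a <= b <= 2 ^ n)%N /\ p = (dyad T n a, dyad T n b)].

Lemma Dg_S2 p : Dg p -> S2 T p.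
Proof.
move=> [n [a [b [/andP[ab bn] ->]]]]; split => /=; first exact: dyad_ge0.
split; first exact: dyad_le.
exact: dyad_leT.
Qed.

Lemma gk_Dg k p : S2 T p -> Dg (gk k p).
Proof.
move=> [p1 [p12 p2]]; exists k, (fl k p.1), (fl k p.2); split => //.
by rewrite fl_mono // fl_leT.
Qed.

Lemma gk_S2 k p : S2 T p -> S2 T (gk k p).
Proof. by move=> /(gk_Dg k) /Dg_S2. Qed.

Lemma gk_close k p : S2 T p ->
  `|(gk k p).1 - p.1| < T / (2 ^ k)%:R /\ `|(gk k p).2 - p.2| < T / (2 ^ k)%:R.
Proof.
move=> [p1 [p12 p2]].
have p20 : 0 <= p.2 by exact: le_trans p12.
rewrite /gk /= !ler0_norm ?subr_le0 ?fl_le // !opprB.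
by split; rewrite ltrBlDr addrC; exact: fl_gt.
Qed.

Lemma small_eventually (e : R) : 0 < e -> \forall k \near \oo, T / (2 ^ k)%:R < e.
Proof.
move=> e0; exists (Num.truncn (e^-1 * T)).+1 => // k /= Kk.
rewrite ltr_pdivrMr ?pow2_gt0 // -ltr_pdivrMl //.
apply: (lt_le_trans (truncnS_gt (e^-1 * T))).
rewrite ler_nat; apply: leq_trans Kk _; apply: ltnW; exact: ltn_expl.
Qed.

End Grid.

Lemma ballR (R : realType) (x y e : R) : ball x e y <-> `|x - y| < e.
Proof. by rewrite -ball_normE. Qed.

Lemma ballRR (R : realType) (p q : R * R) e :
  ball p e q <-> `|p.1 - q.1| < e /\ `|p.2 - q.2| < e.
Proof. by split => -[a b]; split; apply/ballR. Qed.

Lemma small_zero (R : realType) (x : R) : (forall e, 0 < e -> `|x| < e) -> x = 0.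
Proof.
move=> H; apply/eqP; rewrite -normr_eq0; apply/eqP/le_anti.
rewrite normr_ge0 andbT; apply/ler_addgt0Pr => e e0; rewrite add0r; exact/ltW/H.
Qed.

Lemma S2_compact (R : realType) (T : R) : compact (S2 T).
Proof.
apply: (@subclosed_compact _ _ (`[0, T] `*` `[0, T])); last first.
- move=> p [p1 [p12 p2]]; split => /=; rewrite in_itv /= ?p1 ?p2 ?andbT //.
  + exact: le_trans p2.
  + exact: le_trans p12.
- by apply: compact_setX; exact: segment_compact.
have -> : S2 T = (fst @^-1` [set x | 0 <= x]) `&`
   ((fun p : R * R => p.2 - p.1) @^-1` [set x | 0 <= x]) `&` (snd @^-1` [set x | x <= T]).
  rewrite /S2; apply/seteqP; split => p /=.
    by move=> [a [b c]]; rewrite subr_ge0.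
  by move=> [[a b] c]; rewrite subr_ge0 in b.
apply: closedI; [apply: closedI|].
- apply: preimage_closed; [move=> x _; exact: cvg_fst | exact: closed_ge].
- apply: preimage_closed; [move=> x _ | exact: closed_ge].
  by apply: cvgB; [exact: cvg_snd | exact: cvg_fst].
- apply: preimage_closed; [move=> x _; exact: cvg_snd | exact: closed_le].
Qed.

Lemma heine_cantor (R : realType) (T : R) (h : R * R -> R) :
  {within S2 T, continuous h} -> forall e : R, 0 < e ->
  exists2 d, 0 < d & forall p q, S2 T p -> S2 T q ->
    `|p.1 - q.1| < d -> `|p.2 - q.2| < d -> `|h p - h q| < e.
Proof.
move=> ch e e0.
have := (near_covering_withinP (S2 T)).2 ((compact_near_coveringP (S2 T)).1 (@S2_compact R T)).
move=> /(_ nat \oo (fun k p => forall q, S2 T q ->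
   `|p.1 - q.1| < k.+1%:R^-1 -> `|p.2 - q.2| < k.+1%:R^-1 -> `|h p - h q| < e)).
case.
- move=> x Sx.
  have [d d0 Hd] := contw_ed ch Sx (divr_gt0 e0 (ltr0Sn _ 1)).
  have d2 : 0 < d / 2 by exact: divr_gt0.
  near=> x' k => Sx' q Sq h1 h2.
  have Hx' : ball x (d / 2) x' by near: x'; apply: nbhsx_ballx; exact: divr_gt0.
  have Hk : k.+1%:R^-1 < d / 2.
    near: k; exact: (near_infty_natSinv_lt (PosNum d2)).
  move/ballRR: Hx' => [b1 b2].
  have Hxq : ball x d q.
    apply/ballRR; split.
    + rewrite (le_lt_trans (ler_distD x'.1 _ _)) //.
      by rewrite (splitr d) ltrD // (lt_trans h1).
    + rewrite (le_lt_trans (ler_distD x'.2 _ _)) //.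
      by rewrite (splitr d) ltrD // (lt_trans h2).
  have := Hd q Sq Hxq; move/ballR => hq.
  have Hxx' : ball x d x'.
    have dd : d / 2 < d by rewrite ltr_pdivrMr // ltr_pMr // ltr1n.
    by apply/ballRR; split; exact: lt_trans dd.
  have := Hd x' Sx' Hxx'; move/ballR => hx.
  rewrite (le_lt_trans (ler_distD (h x) _ _)) // (splitr e) ltrD // distrC //.
- move=> N _ HN; have := HN N (leqnn N) => /= HN'; exists N.+1%:R^-1 => // p0 q0 Sp Sq; exact: HN'.
Unshelve. all: by end_near. Qed.

Section Ext.
Variables (R : realType) (T : R).
Hypothesis hT : 0 < T.

Lemma gk_near p (d : R) : S2 T p -> 0 < d -> exists K, forall k, (K <= k)%N ->
  `|(gk T k p).1 - p.1| < d /\ `|(gk T k p).2 - p.2| < d.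
Proof.
move=> Sp d0; have [K _ HK] := small_eventually T d0.
exists K => k Kk; have [h1 h2] := gk_close hT k Sp.
by split; [exact: lt_trans (HK k Kk)|exact: lt_trans (HK k Kk)].
Qed.

Lemma half_gt0 (d : R) : 0 < d -> 0 < d / 2.
Proof. by move=> d0; exact: divr_gt0. Qed.

Lemma dist3 (a b c d : R) (e : R) : `|a - b| < e / 2 -> `|b - c| < e / 2 -> `|a - c| < e.
Proof.
move=> h1 h2; rewrite (le_lt_trans (ler_distD b _ _)) // (splitr e) ltrD //.
Qed.

Definition UCD (f : R * R -> R) := forall e : R, 0 < e -> exists2 d : R, 0 < d &
  forall p q, Dg T p -> Dg T q -> `|p.1 - q.1| < d -> `|p.2 - q.2| < d -> `|f p - f q| < e.

Definition Fext (f : R * R -> R) (p : R * R) : R := Lim (fun k => f (gk T k p)).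

Lemma ext_cvg f p : UCD f -> S2 T p -> (fun k => f (gk T k p)) k @[k --> \oo] --> Fext f p.
Proof.
move=> uc Sp.
have cv : cvgn (fun k => f (gk T k p)).
  apply/cauchy_cvgP; apply: cauchy_exP => e e0.
  have [d d0 Hd] := uc e e0.
  have [K HK] := gk_near Sp (half_gt0 d0).
  exists (f (gk T K p)); exists K => // n /= Kn; apply/ballR.
  have [a1 a2] := HK K (leqnn K); have [b1 b2] := HK n Kn.
  apply: Hd; first exact: (gk_Dg hT K Sp); first exact: (gk_Dg hT n Sp).
  + by apply: (@dist3 _ p.1); rewrite // distrC.
  + by apply: (@dist3 _ p.2); rewrite // distrC.
by rewrite /Fext (LimE cv).
Qed.


Lemma dist_3 (a b c d : R) : `|a - d| <= `|a - b| + `|b - c| + `|c - d|.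
Proof.
rewrite (le_trans (ler_distD c _ _)) // lerD2r.
exact: ler_distD.
Qed.

Lemma ext_bound f : UCD f -> forall e : R, 0 < e -> exists2 d : R, 0 < d &
  forall p q, S2 T p -> S2 T q -> `|p.1 - q.1| < d -> `|p.2 - q.2| < d ->
  `|Fext f p - Fext f q| < e.
Proof.
move=> uc e e0.
have e3 : 0 < e / 3 by exact: divr_gt0.
have [d0 d00 Hd] := uc _ e3.
have d4 : 0 < d0 / 4 by exact: divr_gt0.
have d2 : 0 < d0 / 2 by exact: divr_gt0.
exists (d0 / 2) => // p q Sp Sq pq1 pq2.
have /cvgrPdist_lt /(_ _ e3) [N1 _ HN1] := ext_cvg uc Sp.
have /cvgrPdist_lt /(_ _ e3) [N2 _ HN2] := ext_cvg uc Sq.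
have [K1 HK1] := gk_near Sp d4; have [K2 HK2] := gk_near Sq d4.
pose k := maxn (maxn N1 N2) (maxn K1 K2).
have a1 := HN1 k (leq_trans (leq_maxl N1 N2) (leq_maxl _ _)).
have a2 := HN2 k (leq_trans (leq_maxr N1 N2) (leq_maxl _ _)).
have [b1 b2] := HK1 k (leq_trans (leq_maxl K1 K2) (leq_maxr _ _)).
have [c1 c2] := HK2 k (leq_trans (leq_maxr K1 K2) (leq_maxr _ _)).
have m := Hd _ _ (gk_Dg hT k Sp) (gk_Dg hT k Sq).
have g1 := dist_3 (gk T k p).1 p.1 q.1 (gk T k q).1.
have g2 := dist_3 (gk T k p).2 p.2 q.2 (gk T k q).2.
rewrite distrC in c1; rewrite distrC in c2.
have /m {}m : `|(gk T k p).1 - (gk T k q).1| < d0 by lra.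
have /m {}m : `|(gk T k p).2 - (gk T k q).2| < d0 by lra.
have g := dist_3 (Fext f p) (f (gk T k p)) (f (gk T k q)) (Fext f q).
rewrite distrC in a2.
lra.
Qed.

Lemma ext_eq f p : UCD f -> Dg T p -> Fext f p = f p.
Proof.
move=> uc Dp; have Sp := Dg_S2 hT Dp.
apply/eqP; rewrite -subr_eq0; apply/eqP/small_zero => e e0.
have e2 : 0 < e / 2 by exact: divr_gt0.
have [d d0 Hd] := uc _ e2.
have /cvgrPdist_lt /(_ _ e2) [N _ HN] := ext_cvg uc Sp.
have [K HK] := gk_near Sp d0.
pose k := maxn N K.
have a := HN k (leq_maxl _ _).
have [b1 b2] := HK k (leq_maxr _ _).
have := Hd _ _ (gk_Dg hT k Sp) Dp b1 b2.
have := ler_distD (f (gk T k p)) (Fext f p) (f p).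
lra.
Qed.

Lemma ext_cont f : UCD f -> {within S2 T, continuous (Fext f)}.
Proof.
move=> uc; apply: ed_contw => p Sp e e0.
have [d d0 Hd] := ext_bound uc e0.
exists d => // q Sq /ballRR [h1 h2]; apply/ballR; exact: Hd.
Qed.

Lemma unique_S2 (h1 h2 : R * R -> R) :
  {within S2 T, continuous h1} -> {within S2 T, continuous h2} ->
  (forall p, Dg T p -> h1 p = h2 p) -> forall p, S2 T p -> h1 p = h2 p.
Proof.
move=> c1 c2 eqD p Sp.
apply/eqP; rewrite -subr_eq0; apply/eqP/small_zero => e e0.
have e2 : 0 < e / 2 by exact: divr_gt0.
have [d1 d10 H1] := contw_ed c1 Sp e2.
have [d2 d20 H2] := contw_ed c2 Sp e2.
have dm : 0 < Num.min d1 d2 by rewrite lt_min d10 d20.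
have [K HK] := gk_near Sp dm.
have [b1 b2] := HK K (leqnn K).
have Sq := gk_S2 hT K Sp.
have m1 : Num.min d1 d2 <= d1 by rewrite ge_min lexx.
have m2 : Num.min d1 d2 <= d2 by rewrite ge_min lexx orbT.
rewrite distrC in b1; rewrite distrC in b2.
have q1 : ball p d1 (gk T K p).
  by apply/ballRR; split; apply: lt_le_trans m1.
have q2 : ball p d2 (gk T K p).
  by apply/ballRR; split; apply: lt_le_trans m2.
have /ballR a1 := H1 _ Sq q1.
have /ballR a2 := H2 _ Sq q2.
rewrite (eqD (gk T K p) (gk_Dg hT K Sp)) in a1.
have := ler_distD (h2 (gk T K p)) (h1 p) (h2 p).
rewrite (distrC (h2 _)) in a2.
lra.
Qed.

End Ext.

Lemma inv_small (R : realType) (d : R) : 0 < d -> exists l : nat, l.+1%:R^-1 < d.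
Proof.
move=> d0; exists (Num.truncn d^-1).
rewrite -[X in _ < X]invrK ltf_pV2 ?posrE ?invr_gt0 ?ltr0Sn //.
exact: truncnS_gt.
Qed.

Section Cond.
Variables (R : realType) (T : R).
Hypothesis hT : 0 < T.

Definition Cond (f : R * R -> R) : Prop := forall k : nat, exists l : nat,
  forall n a b n' a' b' : nat,
  (a <= b <= 2 ^ n)%N -> (a' <= b' <= 2 ^ n')%N ->
  `|dyad T n a - dyad T n' a'| < l.+1%:R^-1 ->
  `|dyad T n b - dyad T n' b'| < l.+1%:R^-1 ->
  `|f (dyad T n a, dyad T n b) - f (dyad T n' a', dyad T n' b')| <= k.+1%:R^-1.

Lemma Cond_UCD f : Cond f -> UCD T f.
Proof.
move=> C e e0; have [k hk] := inv_small e0.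
have [l Hl] := C k; exists l.+1%:R^-1 => // p q.
move=> [n [a [b [hab ->]]]] [n' [a' [b' [hab' ->]]]] /= h1 h2.
exact: le_lt_trans (Hl _ _ _ _ _ _ hab hab' h1 h2) hk.
Qed.

Lemma UC_Cond f : (forall e : R, 0 < e -> exists2 d : R, 0 < d &
  forall p q, S2 T p -> S2 T q -> `|p.1 - q.1| < d -> `|p.2 - q.2| < d ->
  `|f p - f q| < e) -> Cond f.
Proof.
move=> uc k; have [d d0 Hd] := uc k.+1%:R^-1 ltac:(by rewrite invr_gt0 ltr0Sn).
have [l hl] := inv_small d0; exists l => n a b n' a' b' hab hab' h1 h2.
apply/ltW/Hd => /=.
- by apply: (Dg_S2 hT); exists n, a, b.
- by apply: (Dg_S2 hT); exists n', a', b'.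
- exact: lt_trans hl.
- exact: lt_trans hl.
Qed.

End Cond.

Lemma mx_entry_contw (R : realType) (U : pseudoMetricType R) (m n : nat)
  (A : set U) (F : U -> 'M[R]_(m, n)) i j :
  {within A, continuous F} -> {within A, continuous (fun x => F x i j)}.
Proof.
move=> cF; apply: ed_contw => x Ax e e0.
have [d d0 Hd] := contw_ed cF Ax e0.
exists d => // y Ay xy; have := Hd y Ay xy.
move=> [_ H]; exact: H.
Qed.

Lemma mx_contw (R : realType) (U : pseudoMetricType R) (m n : nat)
  (A : set U) (F : U -> 'M[R]_(m, n)) :
  (forall i j, {within A, continuous (fun x => F x i j)}) -> {within A, continuous F}.
Proof.
move=> cF x.
apply/cvg_mx_entourageP => E entE.
apply: filter_forall => i; apply: filter_forall => j.
have := cF i j x.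
move/cvg_entourageP => /(_ E entE) H.
move: H; have FF := nbhs_subspace_filter x. apply: (@filterS _ _ FF) => y /=; by rewrite inE.
Qed.

Section RS.
Variable R : realType.

Definition xp (s t : R) (N k : nat) : R := s + k%:R * (t - s) / N%:R.

Definition RSsum (f g : R -> R) (s t : R) (N : nat) : R :=
  \sum_(k < N) f (xp s t N k) * (g (xp s t N k.+1) - g (xp s t N k)).

Lemma xpS s t N k : (0 < N)%N -> xp s t N k.+1 - xp s t N k = (t - s) / N%:R.
Proof.
move=> N0; rewrite /xp -natr1; ring.
Qed.

Lemma RS_cvg f g s t J : s <= t -> is_RS_integral f g s t J ->
  RSsum f g s t N @[N --> \oo] --> J.
Proof.
move=> st H; apply/cvgrPdist_lt => e e0.
have [d d0 Hd] := H e e0.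
exists (Num.truncn ((t - s) / d)).+1 => // N /= hN.
have N0 : (0 < N)%N by exact: leq_trans hN.
have Npos : 0 < N%:R :> R by rewrite ltr0n.
rewrite distrC; apply: Hd.
- by rewrite /xp mul0r mul0r addr0.
- by rewrite /xp mulrAC divff ?mul1r ?subrKC // gt_eqF.
- move=> k kN; rewrite lexx /=; split.
    by rewrite -subr_ge0 xpS // divr_ge0 ?subr_ge0 // ltW.
  rewrite xpS // ltr_pdivrMr // -ltr_pdivrMl //.
  apply: lt_le_trans (truncnS_gt _) _; rewrite ler_nat; rewrite mulrC; exact: hN.
Qed.

End RS.

From mathcomp Require Import measurable_realfun.

Section Meas.
Variables (R : realType) (T : R) (m : nat).
Hypothesis hT : 0 < T.

Local Notation CP := (cpathM T m).
Local Notation W := (CP * CP)%type.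

Definition ev (t : R) (i : 'I_m) (u : CP) : R := sval u t ord0 i.

Lemma ev_meas t i : 0 <= t <= T -> measurable_fun setT (ev t i).
Proof.
move=> tT _ B mB; rewrite setTI; apply: sub_sigma_algebra.
by exists t, i, B.
Qed.

Lemma interp_meas n r i (sel : W -> CP) : measurable_fun setT sel ->
  measurable_fun setT (fun w => interp T n (sval (sel w)) r ord0 i).
Proof.
move=> msel; rewrite /interp; case: (r == T).
  by apply: (measurableT_comp (ev_meas _ _) msel); rewrite lexx ltW.
under eq_fun do rewrite summxE.
apply: measurable_sum => k.
have k1 : (k < 2 ^ n)%N := ltn_ord k.
case: (_ && _); last exact: measurable_cst.
under eq_fun do rewrite !mxE.
have e1 : 0 <= dyad T n k <= T.
  by rewrite (dyad_ge0 hT) (dyad_leT hT) // ltnW.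
have e2 : 0 <= dyad T n k.+1 <= T by rewrite (dyad_ge0 hT) (dyad_leT hT).
apply: measurable_realfun.measurable_funD; first exact: (measurableT_comp (ev_meas _ e1) msel).
apply: measurable_realfun.measurable_funM; first exact: measurable_cst.
apply: measurable_realfun.measurable_funB; first exact: (measurableT_comp (ev_meas _ e2) msel).
exact: (measurableT_comp (ev_meas _ e1) msel).
Qed.


Lemma Lim_meas d (X : measurableType d) (u : nat -> X -> R) :
  (forall n, measurable_fun setT (u n)) ->
  measurable_fun setT (fun x => Lim (fun n => u n x)).
Proof.
move=> mu; rewrite /Lim.
have h : measurable_fun setT (fun x => limn_esup (fun n => (u n x)%:E)).
  apply: (measurable_realfun.measurable_fun_limn_esup (f := fun n x => (u n x)%:E)) => n.
  by apply/measurable_EFinP; exact: mu.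
exact: (measurableT_comp (measurable_realfun.fine_measurable measurableT) h).
Qed.

Definition Xs n N s t i j (w : W) : R :=
  RSsum (fun r => interp T n (sval w.1) r ord0 i - interp T n (sval w.1) s ord0 i)
        (fun r => interp T n (sval w.2) r ord0 j) s t N.

Lemma Xs_meas n N s t i j : measurable_fun setT (Xs n N s t i j).
Proof.
rewrite /Xs /RSsum; apply: measurable_sum => k.
apply: measurable_realfun.measurable_funM.
  by apply: measurable_realfun.measurable_funB; apply: interp_meas; exact: measurable_fst.
by apply: measurable_realfun.measurable_funB; apply: interp_meas; exact: measurable_snd.
Qed.

Definition Lf n s t i j (w : W) : R := Lim (fun N => Xs n N s t i j w).
Definition Lv s t i j (w : W) : R := Lim (fun n => Lf n s t i j w).
Definition fw i j (w : W) : R * R -> R := fun q => Lv q.1 q.2 i j w.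
Definition Fw i j (w : W) (p : R * R) : R := Fext T (fw i j w) p.

Lemma Lv_meas s t i j : measurable_fun setT (Lv s t i j).
Proof. by apply: Lim_meas => n; apply: Lim_meas => N; exact: Xs_meas. Qed.

Lemma Fw_meas i j p : measurable_fun setT (fun w => Fw i j w p).
Proof. by apply: Lim_meas => k; exact: Lv_meas. Qed.

Lemma meas_forall (P : nat -> set W) : (forall n, measurable (P n)) ->
  measurable [set w | forall n, P n w].
Proof.
move=> mP; rewrite (_ : [set w | _] = \bigcap_n P n); first exact: bigcapT_measurable.
by apply/seteqP; split => w /= H n; [move=> _|]; exact: H.
Qed.

Lemma meas_exists (P : nat -> set W) : (forall n, measurable (P n)) ->
  measurable [set w | exists n, P n w].
Proof.
move=> mP; rewrite (_ : [set w | _] = \bigcup_n P n); first exact: bigcupT_measurable.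
by apply/seteqP; split => w /= [n]; [exists n|move=> _ H; exists n].
Qed.

Lemma meas_imp (b : bool) (P : set W) : measurable P -> measurable [set w | b -> P w].
Proof.
case: b => mP.
  by rewrite (_ : [set w | _] = P) //; apply/seteqP; split => w /=; [apply|move=> ? ?].
by rewrite (_ : [set w | _] = setT) //; apply/seteqP; split => w //=.
Qed.

Lemma meas_le (g : W -> R) c : measurable_fun setT g -> measurable [set w | g w <= c].
Proof.
move=> mg; have := mg measurableT _ (measurable_itv `]-oo, c]); rewrite setTI.
congr measurable; apply/seteqP; split => w /=; by rewrite in_itv /=.
Qed.

Definition Gs : set W := [set w | forall i j, Cond T (fw i j w)].

Lemma Gs_meas : measurable Gs.
Proof.
rewrite (_ : Gs = \bigcap_(i in setT) \bigcap_(j in setT) [set w | Cond T (fw i j w)]).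
  apply: fin_bigcap_measurable; first exact: finite_finset.
  move=> i _; apply: fin_bigcap_measurable; first exact: finite_finset.
  move=> j _; rewrite /Cond.
  apply: meas_forall => k; apply: meas_exists => l.
  apply: meas_forall => n; apply: meas_forall => a; apply: meas_forall => b.
  apply: meas_forall => n'; apply: meas_forall => a'; apply: meas_forall => b'.
  do 4 apply: meas_imp.
  apply: meas_le; apply: measurableT_comp; first exact: measurable_realfun.normr_measurable.
  by apply: measurable_realfun.measurable_funB; exact: Lv_meas.
by apply/seteqP; split => w /= H i; [move=> _ j _|move=> j]; apply: H.
Qed.

End Meas.

Section IfunS.
Variables (R : realType) (T : R) (m : nat).
Hypothesis hT : 0 < T.

Local Notation CP := (cpathM T m).
Local Notation W := (CP * CP)%type.
Local Notation GS := (@Gs R T m).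

Definition Fmat (w : W) (p : R * R) : 'M[R]_m := \matrix_(i, j) Fw i j w p.

Lemma Fmat_cont w : GS w -> {within S2 T, continuous (Fmat w)}.
Proof.
move=> Gw; apply: mx_contw => i j.
rewrite (_ : (fun x => Fmat w x i j) = Fw i j w); last by apply/funext => x; rewrite mxE.
move=> x; exact: (ext_cont hT (Cond_UCD (Gw i j))).
Qed.

Definition Ifun (w : W) : c2pathM T m :=
  match pselect (GS w) with
  | left h => exist _ (Fmat w) (Fmat_cont h)
  | right _ => exist _ (fun _ => 0) (@cst_c2path R T m)
  end.

Lemma Ifun_val w p i j :
  sval (Ifun w : c2path T m) p i j = if `[< GS w >] then Fw i j w p else 0.
Proof.
rewrite /Ifun; case: pselect => h /=.
  by rewrite mxE asboolT.
by rewrite asboolF // mxE.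
Qed.

Lemma Ifun_meas : measurable_fun setT Ifun.
Proof.
apply: (@measurability _ _ W (c2pathM T m) setT Ifun (@c2path_gens R T m)) => //.
move=> _ [A [p [i [j [B [Sp mB ->]]]]] <-].
rewrite (_ : _ `&` _ = (GS `&` [set w | B (Fw i j w p)]) `|` (~` GS `&` [set w | B 0])).
  apply: measurableU; apply: measurableI.
  - exact: Gs_meas.
  - by have := Fw_meas hT i j p measurableT mB; rewrite setTI.
  - exact: measurableC (Gs_meas hT).
  - case: (pselect (B 0)) => h.
      by rewrite (_ : [set w | B 0] = setT) //; apply/seteqP; split.
    by rewrite (_ : [set w | B 0] = set0) //; apply/seteqP; split.
apply/seteqP; split => w /=; rewrite Ifun_val; case: asboolP => h.
- by move=> [_ Bw]; left.
- by move=> [_ Bw]; right.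
- by move=> [[_ Bw]|[]].
- by move=> [[]|[_ Bw]].
Qed.

End IfunS.

Section Core.
Variables (R : realType) (T : R) (m : nat).
Hypothesis hT : 0 < T.
Variables (V1 V2 : R -> 'rV[R]_m) (V21 : R -> R -> 'M[R]_m).
Hypotheses (c1 : {within `[0, T], continuous V1}) (c2 : {within `[0, T], continuous V2})
  (c21 : {within S2 T, continuous (fun p => V21 p.1 p.2)}).
Hypothesis P : forall s t, S2 T (s, t) -> forall i j : 'I_m,
     exists J : nat -> R,
       (forall n, is_RS_integral
          (fun r => interp T n V2 r ord0 i - interp T n V2 s ord0 i)
          (fun r => interp T n V1 r ord0 j) s t (J n))
       /\ J @ \oo --> V21 s t i j.

Let w : cpathM T m * cpathM T m := (exist _ V2 c2 : cpath T m, exist _ V1 c1 : cpath T m).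

Lemma stepA s t i j : S2 T (s, t) -> Lv s t i j w = V21 s t i j.
Proof.
move=> Sst; have [J [HJ cJ]] := P Sst i j.
have st : s <= t by case: Sst => _ [].
rewrite /Lv (_ : (fun n => Lf n s t i j w) = J); first exact: LimE.
apply/funext => n; rewrite /Lf; apply: LimE.
exact: (RS_cvg st (HJ n)).
Qed.

Lemma stepB i j : Cond T (fw i j w).
Proof.
apply: (UC_Cond hT) => e e0.
have cij : {within S2 T, continuous (fun p : R * R => V21 p.1 p.2 i j)}.
  have h := @mx_entry_contw R _ m m (S2 T) (fun p : R * R => V21 p.1 p.2) i j c21. exact: h.
have [d d0 Hd] := heine_cantor cij e0.
exists d => // p q Sp Sq h1 h2.
rewrite /fw (@stepA p.1 p.2 i j Sp) (@stepA q.1 q.2 i j Sq).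
exact: (Hd _ _ Sp Sq h1 h2).
Qed.

Lemma core s t : S2 T (s, t) -> V21 s t = sval (Ifun hT w : c2path T m) (s, t).
Proof.
move=> Sst; apply/matrixP => i j.
have Gw : Gs w by move=> i' j'; exact: stepB.
rewrite Ifun_val asboolT //.
have cij : {within S2 T, continuous (fun p : R * R => V21 p.1 p.2 i j)}.
  have h := @mx_entry_contw R _ m m (S2 T) (fun p : R * R => V21 p.1 p.2) i j c21. exact: h.
have cF : {within S2 T, continuous (Fw i j w)}.
  by move=> x; exact: (ext_cont hT (Cond_UCD (stepB i j))).
apply: (unique_S2 hT cij cF _ Sst) => p Dp.
rewrite /Fw (ext_eq hT (Cond_UCD (stepB i j)) Dp) /fw (@stepA p.1 p.2 i j (Dg_S2 hT Dp)).
by [].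
Qed.

End Core.

Section Gen.
Variables (d : measure_display) (X : measurableType d) (R : realType).

Lemma gmeas_forall (P : nat -> set X) : (forall n, measurable (P n)) ->
  measurable [set x | forall n, P n x].
Proof.
move=> mP; rewrite (_ : [set x | _] = \bigcap_n P n); first exact: bigcapT_measurable.
by apply/seteqP; split => w /= H n; [move=> _|]; exact: H.
Qed.

Lemma gmeas_forall_fin (I : finType) (P : I -> set X) : (forall n, measurable (P n)) ->
  measurable [set x | forall n, P n x].
Proof.
move=> mP; rewrite (_ : [set x | _] = \bigcap_(n in setT) P n).
  by apply: fin_bigcap_measurable; [exact: finite_finset| move=> n _; exact: mP].
by apply/seteqP; split => w /= H n; [move=> _|]; exact: H.
Qed.

Lemma gmeas_imp (b : bool) (P : set X) : (b -> measurable P) ->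
  measurable [set x | b -> P x].
Proof.
case: b => mP.
  by rewrite (_ : [set w | _] = P); [exact: mP|apply/seteqP; split => w /=; [apply|move=> ? ?]].
by rewrite (_ : [set w | _] = setT) //; apply/seteqP; split => w //=.
Qed.

Lemma gmeas_eq (f g : X -> R) : measurable_fun setT f -> measurable_fun setT g ->
  measurable [set x | f x = g x].
Proof.
move=> mf mg.
have mh : measurable_fun setT (fun x => `|f x - g x|).
  apply: measurableT_comp; first exact: normr_measurable.
  exact: measurable_funB.
have := mh measurableT _ (measurable_itv `]-oo, 0]); rewrite setTI.
congr measurable; apply/seteqP; split => x /=; rewrite in_itv /=.
  by rewrite normr_le0 subr_eq0 => /eqP.
by move=> ->; rewrite subrr normr0.
Qed.

End Gen.

Theorem proposition17
  (R : realType) (T : R) (m : nat) (q : R)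
  (d : measure_display) (Xi : measurableType d) (Q : probability Xi R)
  (W1 W2 : Xi -> R -> 'rV[R]_m)
  (W11 W12 W21 W22 : Xi -> R -> R -> 'M[R]_m)
  (hT : 0 < T) (hm : (1 <= m)%N) (hq : 1 <= q)
  (* measurability (the W's are random variables) *)
  (mW1 : forall t (i : 'I_m), 0 <= t <= T ->
     measurable_fun setT (fun xi => W1 xi t ord0 i))
  (mW2 : forall t (i : 'I_m), 0 <= t <= T ->
     measurable_fun setT (fun xi => W2 xi t ord0 i))
  (mW11 : forall s t (i j : 'I_m), S2 T (s, t) ->
     measurable_fun setT (fun xi => W11 xi s t i j))
  (mW12 : forall s t (i j : 'I_m), S2 T (s, t) ->
     measurable_fun setT (fun xi => W12 xi s t i j))
  (mW21 : forall s t (i j : 'I_m), S2 T (s, t) ->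
     measurable_fun setT (fun xi => W21 xi s t i j))
  (mW22 : forall s t (i j : 'I_m), S2 T (s, t) ->
     measurable_fun setT (fun xi => W22 xi s t i j))
  (* continuous trajectories *)
  (cW1 : forall xi, {within `[0, T], continuous (W1 xi)})
  (cW2 : forall xi, {within `[0, T], continuous (W2 xi)})
  (cW11 : forall xi, {within S2 T, continuous (fun p => W11 xi p.1 p.2)})
  (cW12 : forall xi, {within S2 T, continuous (fun p => W12 xi p.1 p.2)})
  (cW21 : forall xi, {within S2 T, continuous (fun p => W21 xi p.1 p.2)})
  (cW22 : forall xi, {within S2 T, continuous (fun p => W22 xi p.1 p.2)})
  (* W1 and W2 independent and identically distributed *)
  (indW : indep_sigma Q (gens_path T W1) (gens_path T W2))
  (idW : forall A : set (R -> 'rV[R]_m), path_sigma T A -> Q (W1 @^-1` A) = Q (W2 @^-1` A))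
  (* moment conditions *)
  (momW1 : (\int[Q]_xi ereal_sup
              [set ((`|W1 xi t|) `^ q)%:E | t in `[0%R, T]] < +oo)%E)
  (momW : forall W, [\/ W = W11, W = W12, W = W21 | W = W22] ->
     (\int[Q]_xi ereal_sup
        [set ((`|W xi p.1 p.2|) `^ q)%:E | p in S2 T] < +oo)%E)
  (* (W1, W11) independent of W2 *)
  (indW11 : indep_sigma Q (gens_path T W1 `|` gens_2path T W11) (gens_path T W2))
  (* Chen's relation, a.s. *)
  (hchen : {ae Q, forall xi,
     [/\ chen T (W1 xi) (W1 xi) (W11 xi), chen T (W1 xi) (W2 xi) (W12 xi),
         chen T (W2 xi) (W1 xi) (W21 xi) & chen T (W2 xi) (W2 xi) (W22 xi)]})
  (* W21 is a.s. the limit of the integrals along dyadic interpolations *)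
  (hlim : {ae Q, forall xi, forall s t, S2 T (s, t) -> forall i j : 'I_m,
     exists J : nat -> R,
       (forall n, is_RS_integral
          (fun r => interp T n (W2 xi) r ord0 i - interp T n (W2 xi) s ord0 i)
          (fun r => interp T n (W1 xi) r ord0 j) s t (J n))
       /\ J @ \oo --> W21 xi s t i j}) :
  exists I : cpathM T m * cpathM T m -> c2pathM T m,
    measurable_fun setT I /\
    let E := [set xi | forall s t, S2 T (s, t) ->
       W21 xi s t = sval (I (exist _ (W2 xi) (cW2 xi) : cpath T m,
                              exist _ (W1 xi) (cW1 xi) : cpath T m)) (s, t)] in
    measurable E /\ Q E = 1%E.
Proof.
pose phi := fun xi => (exist _ (W2 xi) (cW2 xi) : cpath T m,
                       exist _ (W1 xi) (cW1 xi) : cpath T m).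
exists (Ifun hT); split; first exact: Ifun_meas hT.
have mphi : measurable_fun setT (phi : Xi -> cpathM T m * cpathM T m).
  apply: measurable_fun_pair.
  + apply: (@measurability _ _ Xi (cpathM T m) setT _ (@cpath_gens R T m)) => //.
    move=> _ [A [t [i [B [tT mB ->]]]] <-]; have h := mW2 t i tT measurableT B mB; exact: h.
  + apply: (@measurability _ _ Xi (cpathM T m) setT _ (@cpath_gens R T m)) => //.
    move=> _ [A [t [i [B [tT mB ->]]]] <-]; have h := mW1 t i tT measurableT B mB; exact: h.
move=> E.
pose Eg := [set xi | forall n a b : nat, (a <= b <= 2 ^ n)%N -> forall i j : 'I_m,
  W21 xi (dyad T n a) (dyad T n b) i j =
  sval (Ifun hT (phi xi) : c2path T m) (dyad T n a, dyad T n b) i j].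
have EE : E = Eg.
  apply/seteqP; split => xi /=.
  - move=> H n a b hab i j.
    have hS : S2 T (dyad T n a, dyad T n b) by apply: (Dg_S2 hT); exists n, a, b.
    by rewrite (H _ _ hS).
  - move=> H s t Sst; apply/matrixP => i j.
    have c1 : {within S2 T, continuous (fun p : R * R => W21 xi p.1 p.2 i j)}.
      have h := @mx_entry_contw R _ m m (S2 T) (fun p : R * R => W21 xi p.1 p.2) i j (cW21 xi).
      exact: h.
    have c2 : {within S2 T, continuous
                (fun p : R * R => sval (Ifun hT (phi xi) : c2path T m) p i j)}.
      have h := @mx_entry_contw R _ m m (S2 T) (sval (Ifun hT (phi xi) : c2path T m)) i j
                  (svalP (Ifun hT (phi xi) : c2path T m)).
      exact: h.
    have ag : forall p, Dg T p -> (fun p : R * R => W21 xi p.1 p.2 i j) p =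
                (fun p : R * R => sval (Ifun hT (phi xi) : c2path T m) p i j) p.
      by move=> p [n [a [b [hab ->]]]]; exact: H n a b hab i j.
    exact: (unique_S2 hT c1 c2 ag Sst).
have mE : measurable E.
  rewrite EE; apply: gmeas_forall => n; apply: gmeas_forall => a; apply: gmeas_forall => b.
  apply: gmeas_imp => hab.
  have hS : S2 T (dyad T n a, dyad T n b) by apply: (Dg_S2 hT); exists n, a, b.
  apply: gmeas_forall_fin => i; apply: gmeas_forall_fin => j.
  apply: gmeas_eq; first exact: mW21.
  have mev : measurable_fun setT
      (fun g : c2pathM T m => sval (g : c2path T m) (dyad T n a, dyad T n b) i j).
    move=> _ B mB; rewrite setTI; apply: sub_sigma_algebra.
    by exists (dyad T n a, dyad T n b), i, j, B.
  exact: measurableT_comp mev (measurableT_comp (Ifun_meas hT) mphi).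
split => //.
have [N [mN QN sN]] := hlim.
have sub : ~` E `<=` N.
  move=> xi nE; apply: sN => HP; apply: nE => s t Sst.
  exact: (core hT (cW1 xi) (cW2 xi) (cW21 xi) HP Sst).
have QC : Q (~` E) = 0.
  apply/eqP; rewrite eq_le measure_ge0 andbT -QN.
  by apply: le_measure => //; rewrite inE //; exact: measurableC.
have := probability_setC Q (measurableC mE).
by rewrite setCK QC sube0.
Qed.
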